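(* There is an absolute constant $C>0$ such that for all $n,m\ge3$ and $p\in(0,1)$, $$n^2\|\bar g_2\ast_2^0\bar g_2\|_2^2\le C\big(\operatorname{Var}[N_E]\big)^2\frac{1}{n^2\hat p(1-\hat p)},\qquad n^3\|\bar g_2\ast_2^1\bar g_2\|_2^2\le C\big(\operatorname{Var}[N_E]\big)^2\Big(\frac{1}{n^2\hat p(1-\hat p)}+\frac1n\Big),$$ where $N_E$ is the number of edges of $\mathcal G(n,m,p)$.
   Context: Random intersection graph $\mathcal G(n,m,p)$: vertices $v_1,\ldots,v_n$, attributes $a_1,\ldots,a_m$; each vertex chooses each attribute independently with probability $p$; two vertices are adjacent iff they chose a common attribute; $\hat p=1-(1-p^2)^m$. $\mu_{m,p}(x)=p^{|x|}(1-p)^{m-|x|}$ on $\{0,1\}^m$; $g(x,y)=1$ if $x_i=y_i=1$ for some $i$, else $0$; $\bar g_2=g-\hat p$. Norms are $L^2$ with respect to products of $\mu_{m,p}$. Contraction: for $f,h$ on $(\{0,1\}^m)^2$ and $0\le a\le 2$, $f\ast_2^ah(x_1,\ldots,x_{2-a})=\int_{(\{0,1\}^m)^a}f(w,x)h(w,x)\,d\mu_{m,p}^{\otimes a}(w)$ (so $\|\bar g_2\ast_2^0\bar g_2\|_2^2=\int\bar g_2^4$ and $\|\bar g_2\ast_2^1\bar g_2\|_2^2=\int(\int\bar g_2(x,y)^2d\mu_{m,p}(x))^2d\mu_{m,p}(y)$). *)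

(* Defs.v *)
From mathcomp Require Import all_boot all_order all_algebra.
From mathcomp Require Import reals.
Set Implicit Arguments. Unset Strict Implicit. Unset Printing Implicit Defensive.
Import Order.TTheory GRing.Theory Num.Theory.
Local Open Scope ring_scope.

Definition attr (m : nat) := {ffun 'I_m -> bool}.

Section RIG.
Variable R : realType.

Definition wt m (x : attr m) : nat := #|[set i | x i]|.

Definition mu m (p : R) (x : attr m) : R :=
  p ^+ wt x * (1 - p) ^+ (m - wt x).

Definition g m (x y : attr m) : R :=
  if [exists i, x i && y i] then 1 else 0.

Definition phat (m : nat) (p : R) : R := 1 - (1 - p ^+ 2) ^+ m.

Definition gbar2 m (p : R) (x y : attr m) : R := g x y - phat m p.

(* || gbar2 *_2^0 gbar2 ||_2^2 = \int gbar2^4 d(mu x mu) *)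
Definition contr0_sq m (p : R) : R :=
  \sum_(x : attr m) \sum_(y : attr m) mu p x * mu p y * gbar2 p x y ^+ 4.

(* || gbar2 *_2^1 gbar2 ||_2^2 = \int (\int gbar2(x,y)^2 dmu(x))^2 dmu(y) *)
Definition contr1_sq m (p : R) : R :=
  \sum_(y : attr m) mu p y * (\sum_(x : attr m) mu p x * gbar2 p x y ^+ 2) ^+ 2.

(* Vertex configurations of G(n,m,p): vertex v_i chooses attribute set X i;
   these are independent with law mu_{m,p}, so the configuration has the
   product weight below. *)
Definition config_weight n m (p : R) (X : {ffun 'I_n -> attr m}) : R :=
  \prod_(i < n) mu p (X i).

Definition NE n m (X : {ffun 'I_n -> attr m}) : R :=
  \sum_(i < n) \sum_(j < n | (i < j)%N) g (X i) (X j).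

Definition expect (n m : nat) (p : R) (F : {ffun 'I_n -> attr m} -> R) : R :=
  \sum_(X : {ffun 'I_n -> attr m}) config_weight p X * F X.

Definition Var_NE (n m : nat) (p : R) : R :=
  @expect n m p (fun X => NE X ^+ 2) - (@expect n m p (fun X => NE X)) ^+ 2.

End RIG.

(* Main.v *)
Require Import Defs.
From mathcomp Require Import all_boot all_order all_algebra.
From mathcomp Require Import reals.
From mathcomp Require Import ring lra zify.
Import Order.TTheory GRing.Theory Num.Theory.
Local Open Scope ring_scope.

Section S.
Variable R : realType.
Variable p : R.
Hypothesis p0 : 0 < p.
Hypothesis p1 : p < 1.

Definition w (b : bool) : R := if b then p else 1 - p.

Lemma muE {m} (x : attr m) : mu p x = \prod_t w (x t).
Proof.
rewrite /mu /w (bigID (fun t => x t)) /=.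
rewrite [X in _ = X * _](eq_bigr (fun _ => p)); last by move=> t ->.
rewrite [X in _ = _ * X](eq_bigr (fun _ => 1 - p)); last by move=> t /negbTE ->.
rewrite !prodr_const; congr (_ ^+ _ * _ ^+ _).
  by rewrite /wt cardsE.
rewrite /wt -[X in (X - _)%N](card_ord m) -(cardC [pred t | x t]) cardsE addKn.
by apply: eq_card => t; rewrite !inE.
Qed.

Lemma sum_prod {m} (F : 'I_m -> bool -> R) :
  \sum_(a : attr m) \prod_t F t (a t) = \prod_t (F t true + F t false).
Proof. by rewrite -bigA_distr_bigA; apply: eq_bigr => t _; rewrite big_bool. Qed.

Lemma sum_mu m : \sum_(x : attr m) mu p x = 1.
Proof.
under eq_bigr do rewrite muE.
rewrite (@sum_prod _ (fun _ b => w b)) /w.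
by rewrite big1 // => t _; rewrite addrC subrK.
Qed.

Lemma mu_ge0 {m} (x : attr m) : 0 <= mu p x.
Proof. rewrite muE; apply: prodr_ge0 => t _; rewrite /w; case: (x t) => /=; [exact: ltW|rewrite subr_ge0; exact: ltW]. Qed.

Lemma gE {m} (a b : attr m) : g R a b = 1 - \prod_t (1 - (a t && b t)%:R).
Proof.
rewrite /g; case: existsP => [[t /andP [ha hb]]|H].
  by rewrite (bigD1 t) //= ha hb subrr mul0r subr0.
rewrite big1 ?subrr // => t _.
case: (boolP (a t && b t)) => [h|]; last by rewrite subr0.
by case: H; exists t.
Qed.

Lemma gC {m} (a b : attr m) : g R a b = g R b a.
Proof. by rewrite /g; congr (if _ then _ else _); apply: eq_existsb => t; rewrite andbC. Qed.

Lemma g01 {m} (a b : attr m) : g R a b = 0 \/ g R a b = 1.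
Proof. by rewrite /g; case: ifP; [right|left]. Qed.

Lemma gg {m} (a b : attr m) : g R a b * g R a b = g R a b.
Proof. by case: (g01 a b) => ->; rewrite ?mul0r ?mul1r. Qed.

Definition qq m := \sum_(a : attr m) \sum_(b : attr m) mu p a * mu p b * g R a b.

Lemma inner1 {m} (a : attr m) :
  \sum_(b : attr m) mu p b * (1 - g R a b) = \prod_t (1 - p * (a t)%:R).
Proof.
transitivity (\sum_(b : attr m) \prod_t (w (b t) * (1 - (a t && b t)%:R))).
  apply: eq_bigr => b _; rewrite (gE a b) opprB addrC subrK muE -big_split //.
etransitivity; first exact: (@sum_prod _ (fun t β => w β * (1 - (a t && β)%:R))).
apply: eq_bigr => t _; rewrite /w andbT andbF; case: (a t) => /=; ring.
Qed.

Lemma outer1 m :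
  \sum_(a : attr m) mu p a * \prod_t (1 - p * (a t)%:R) = (1 - p ^+ 2) ^+ m.
Proof.
transitivity (\sum_(a : attr m) \prod_t (w (a t) * (1 - p * (a t)%:R))).
  by apply: eq_bigr => a _; rewrite muE -big_split.
etransitivity; first exact: (@sum_prod _ (fun t β => w β * (1 - p * β%:R))).
rewrite -[m in RHS]card_ord -prodr_const; apply: eq_bigr => t _; rewrite /w /=; ring.
Qed.

Lemma qqE m : qq m = phat m p.
Proof.
rewrite /phat -(outer1 m) -{1}(sum_mu m) -sumrB /qq; apply: eq_bigr => a _.
rewrite -inner1.
have -> : \sum_(b : attr m) mu p b * (1 - g R a b) = 1 - \sum_(b : attr m) mu p b * g R a b.
  rewrite -[X in _ = X - _](sum_mu m) -sumrB; apply: eq_bigr => b _; ring.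
rewrite mulrBr mulr1 opprB addrC subrK mulr_sumr; apply: eq_bigr => b _; ring.
Qed.


Lemma expect_prod {n m} (f : 'I_n -> attr m -> R) :
  expect p (fun X : {ffun 'I_n -> attr m} => \prod_i f i (X i))
  = \prod_i \sum_(x : attr m) mu p x * f i x.
Proof.
rewrite /expect /config_weight /=.
rewrite bigA_distr_bigA; apply: eq_bigr => X _; by rewrite [RHS]big_split.
Qed.

Lemma expect_sum {n m} (I : Type) (r : seq I) (P : pred I)
  (F : I -> {ffun 'I_n -> attr m} -> R) :
  expect p (fun X => \sum_(i <- r | P i) F i X) = \sum_(i <- r | P i) expect p (F i).
Proof.
rewrite /expect exchange_big /=; apply: eq_bigr => X _; exact: mulr_sumr.
Qed.

Lemma expectZ {n m} c (F : {ffun 'I_n -> attr m} -> R) :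
  expect p (fun X => c * F X) = c * expect p F.
Proof. rewrite /expect mulr_sumr; apply: eq_bigr => X _; ring. Qed.

Lemma expectB {n m} (F G : {ffun 'I_n -> attr m} -> R) :
  expect p (fun X => F X - G X) = expect p F - expect p G.
Proof. rewrite /expect -sumrB; apply: eq_bigr => X _; ring. Qed.

Lemma expect_ext {n m} (F G : {ffun 'I_n -> attr m} -> R) :
  (forall X, F X = G X) -> expect p F = expect p G.
Proof. by move=> h; rewrite /expect; apply: eq_bigr => X _; rewrite h. Qed.

Lemma sum_ind (T : finType) (x : T) (G : T -> R) :
  \sum_a (x == a)%:R * G a = G x.
Proof.
rewrite (bigD1 x) //= eqxx mul1r big1 ?addr0 // => a /negbTE.
by rewrite eq_sym => ->; rewrite mul0r.
Qed.

Lemma expect_ind {n m k} (s : 'I_k -> 'I_n) (Y : 'I_k -> attr m) :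
  injective s ->
  expect p (fun X : {ffun 'I_n -> attr m} => \prod_j (X (s j) == Y j)%:R)
  = \prod_j mu p (Y j).
Proof.
move=> sinj.
rewrite (@expect_ext _ _ _ (fun X => \prod_i \prod_(j | s j == i) (X i == Y j)%:R)); last first.
  move=> X; rewrite (partition_big s xpredT) //=.
  by apply: eq_bigr => i _; apply: eq_bigr => j /eqP <-.
rewrite (expect_prod (fun i x => \prod_(j | s j == i) (x == Y j)%:R)) [RHS](partition_big s xpredT) //=.
apply: eq_bigr => i _.
case: (pickP (fun j => s j == i)) => [j0 hj0|hn].
  have P1 : (fun j => s j == i) =1 pred1 j0.
    move/eqP: hj0 => hj0 j /=; apply/eqP/eqP => [h|->] //.
    by apply: sinj; rewrite h hj0.
  rewrite (big_pred1 j0 P1).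
  under eq_bigr do rewrite (big_pred1 j0 P1).
  under eq_bigr do rewrite mulrC.
  under eq_bigr do rewrite eq_sym.
  by rewrite sum_ind.
rewrite [RHS]big_pred0 //.
under eq_bigr do rewrite big_pred0 // mulr1.
exact: sum_mu.
Qed.

Lemma sum_ind2 {m} (x y : attr m) (F : attr m -> attr m -> R) :
  \sum_(a : attr m) \sum_(b : attr m) F a b * ((x == a)%:R * ((y == b)%:R * 1)) = F x y.
Proof.
transitivity (\sum_(a : attr m) (x == a)%:R * \sum_(b : attr m) (y == b)%:R * F a b).
  apply: eq_bigr => a _; rewrite mulr_sumr; apply: eq_bigr => b _; ring.
by rewrite sum_ind sum_ind.
Qed.

Lemma sum_ind3 {m} (x y z : attr m) (F : attr m -> attr m -> attr m -> R) :
  \sum_(a : attr m) \sum_(b : attr m) \sum_(c : attr m)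
     F a b c * ((x == a)%:R * ((y == b)%:R * ((z == c)%:R * 1))) = F x y z.
Proof.
transitivity (\sum_(a : attr m) (x == a)%:R * \sum_(b : attr m) (y == b)%:R *
   \sum_(c : attr m) (z == c)%:R * F a b c).
  apply: eq_bigr => a _; rewrite mulr_sumr; apply: eq_bigr => b _.
  rewrite mulr_sumr mulr_sumr; apply: eq_bigr => c _; ring.
by rewrite sum_ind sum_ind sum_ind.
Qed.

Lemma sum_ind4 {m} (x y z u : attr m) (F : attr m -> attr m -> attr m -> attr m -> R) :
  \sum_(a : attr m) \sum_(b : attr m) \sum_(c : attr m) \sum_(d : attr m)
     F a b c d * ((x == a)%:R * ((y == b)%:R * ((z == c)%:R * ((u == d)%:R * 1)))) = F x y z u.
Proof.
transitivity (\sum_(a : attr m) (x == a)%:R * \sum_(b : attr m) (y == b)%:R *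
   \sum_(c : attr m) (z == c)%:R * \sum_(d : attr m) (u == d)%:R * F a b c d).
  apply: eq_bigr => a _; rewrite mulr_sumr; apply: eq_bigr => b _.
  rewrite mulr_sumr mulr_sumr; apply: eq_bigr => c _.
  rewrite mulr_sumr mulr_sumr mulr_sumr; apply: eq_bigr => d _; ring.
by rewrite sum_ind sum_ind sum_ind sum_ind.
Qed.

Lemma E2 {n m} (i j : 'I_n) (F : attr m -> attr m -> R) : i != j ->
  expect p (fun X : {ffun 'I_n -> attr m} => F (X i) (X j))
  = \sum_(a : attr m) \sum_(b : attr m) mu p a * mu p b * F a b.
Proof.
move=> hij.
pose s := fun t : 'I_2 => nth i [:: i; j] t.
have sinj : injective s.
  move=> [[|[|?]] ?] [[|[|?]] ?] //= h; apply: val_inj => //=; 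
  by move: h hij; rewrite /s /= => ->; rewrite ?eqxx.
rewrite (@expect_ext _ _ _ (fun X => \sum_(a : attr m) \sum_(b : attr m)
   F a b * \prod_(t < 2) (X (s t) == nth a [:: a; b] t)%:R)); last first.
  by move=> X; rewrite -[LHS](sum_ind2 (X i) (X j) F); apply: eq_bigr => a _;
     apply: eq_bigr => b _; rewrite !big_ord_recl big_ord0.
rewrite expect_sum; apply: eq_bigr => a _.
rewrite expect_sum; apply: eq_bigr => b _.
rewrite expectZ (@expect_ind _ _ _ s (fun t : 'I_2 => nth a [:: a; b] t) sinj).
rewrite !big_ord_recl big_ord0 /=; ring.
Qed.

Lemma E3 {n m} (i j k : 'I_n) (F : attr m -> attr m -> attr m -> R) :
  i != j -> i != k -> j != k ->
  expect p (fun X : {ffun 'I_n -> attr m} => F (X i) (X j) (X k))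
  = \sum_(a : attr m) \sum_(b : attr m) \sum_(c : attr m) mu p a * mu p b * mu p c * F a b c.
Proof.
move=> hij hik hjk.
pose s := fun t : 'I_3 => nth i [:: i; j; k] t.
have sinj : injective s.
  move=> [[|[|[|?]]] ?] [[|[|[|?]]] ?] //= h; apply: val_inj => //=;
  move: h; rewrite /s /= => h; subst;
  by rewrite ?eqxx in hij hik hjk.
rewrite (@expect_ext _ _ _ (fun X => \sum_(a : attr m) \sum_(b : attr m) \sum_(c : attr m)
   F a b c * \prod_(t < 3) (X (s t) == nth a [:: a; b; c] t)%:R)); last first.
  by move=> X; rewrite -[LHS](sum_ind3 (X i) (X j) (X k) F); apply: eq_bigr => a _;
     apply: eq_bigr => b _; apply: eq_bigr => c _; rewrite !big_ord_recl big_ord0.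
rewrite expect_sum; apply: eq_bigr => a _.
rewrite expect_sum; apply: eq_bigr => b _.
rewrite expect_sum; apply: eq_bigr => c _.
rewrite expectZ (@expect_ind _ _ _ s (fun t : 'I_3 => nth a [:: a; b; c] t) sinj).
rewrite !big_ord_recl big_ord0 /=; ring.
Qed.

Lemma E4 {n m} (i j k l : 'I_n) (F : attr m -> attr m -> attr m -> attr m -> R) :
  i != j -> i != k -> i != l -> j != k -> j != l -> k != l ->
  expect p (fun X : {ffun 'I_n -> attr m} => F (X i) (X j) (X k) (X l))
  = \sum_(a : attr m) \sum_(b : attr m) \sum_(c : attr m) \sum_(d : attr m)
      mu p a * mu p b * mu p c * mu p d * F a b c d.
Proof.
move=> hij hik hil hjk hjl hkl.
pose s := fun t : 'I_4 => nth i [:: i; j; k; l] t.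
have sinj : injective s.
  move=> [[|[|[|[|?]]]] ?] [[|[|[|[|?]]]] ?] //= h; apply: val_inj => //=;
  move: h; rewrite /s /= => h; subst;
  by rewrite ?eqxx in hij hik hil hjk hjl hkl.
rewrite (@expect_ext _ _ _ (fun X => \sum_(a : attr m) \sum_(b : attr m) \sum_(c : attr m)
   \sum_(d : attr m)
   F a b c d * \prod_(t < 4) (X (s t) == nth a [:: a; b; c; d] t)%:R)); last first.
  by move=> X; rewrite -[LHS](sum_ind4 (X i) (X j) (X k) (X l) F); apply: eq_bigr => a _;
     apply: eq_bigr => b _; apply: eq_bigr => c _; apply: eq_bigr => d _;
     rewrite !big_ord_recl big_ord0.
rewrite expect_sum; apply: eq_bigr => a _.
rewrite expect_sum; apply: eq_bigr => b _.
rewrite expect_sum; apply: eq_bigr => c _.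
rewrite expect_sum; apply: eq_bigr => d _.
rewrite expectZ (@expect_ind _ _ _ s (fun t : 'I_4 => nth a [:: a; b; c; d] t) sinj).
rewrite !big_ord_recl big_ord0 /=; ring.
Qed.

Definition rr {m} (a : attr m) := \sum_(b : attr m) mu p b * g R a b.
Definition s2 m := \sum_(a : attr m) mu p a * rr a ^+ 2.
Definition vv m := s2 m - qq m ^+ 2.

Lemma sum_mu_rr m : \sum_(a : attr m) mu p a * rr a = qq m.
Proof. rewrite /qq; apply: eq_bigr => a _; rewrite /rr mulr_sumr; apply: eq_bigr => b _; ring. Qed.

Lemma sq_exp {m} (c : R) : \sum_(a : attr m) mu p a * (rr a - c) ^+ 2 =
  \sum_(a : attr m) mu p a * rr a ^+ 2 - 2 * c * (\sum_(a : attr m) mu p a * rr a)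
  + c ^+ 2 * \sum_(a : attr m) mu p a.
Proof. rewrite !mulr_sumr -sumrB -big_split /=; apply: eq_bigr => a _; ring. Qed.

Lemma vvE m : vv m = \sum_(a : attr m) mu p a * (rr a - qq m) ^+ 2.
Proof. by rewrite sq_exp sum_mu_rr sum_mu /vv /s2; ring. Qed.

Lemma vv_ge0 m : 0 <= vv m.
Proof. rewrite vvE; apply: sumr_ge0 => a _; apply: mulr_ge0; [exact: mu_ge0|exact: sqr_ge0]. Qed.

Lemma F1 {n m} (i j : 'I_n) : i != j ->
  expect p (fun X : {ffun 'I_n -> attr m} => g R (X i) (X j)) = qq m.
Proof. by move=> h; rewrite (E2 _ _ (@g R m)). Qed.

Lemma F2 {n m} (i j : 'I_n) : i != j ->
  expect p (fun X : {ffun 'I_n -> attr m} => g R (X i) (X j) * g R (X i) (X j)) = qq m.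
Proof.
move=> h; rewrite -(F1 _ _ h); apply: expect_ext => X; exact: gg.
Qed.

Lemma F3 {n m} (i j k : 'I_n) : i != j -> i != k -> j != k ->
  expect p (fun X : {ffun 'I_n -> attr m} => g R (X i) (X j) * g R (X i) (X k)) = s2 m.
Proof.
move=> h1 h2 h3; rewrite (E3 _ _ _ (fun a b c : attr m => g R a b * g R a c)) //.
rewrite /s2; apply: eq_bigr => a _; rewrite /rr expr2 mulr_suml mulr_sumr.
apply: eq_bigr => b _; rewrite !mulr_sumr; apply: eq_bigr => c _; ring.
Qed.

Lemma F4 {n m} (i j k l : 'I_n) : i != j -> i != k -> i != l -> j != k -> j != l -> k != l ->
  expect p (fun X : {ffun 'I_n -> attr m} => g R (X i) (X j) * g R (X k) (X l)) = qq m ^+ 2.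
Proof.
move=> h1 h2 h3 h4 h5 h6; rewrite (E4 _ _ _ _ (fun a b c d : attr m => g R a b * g R c d)) //.
rewrite /qq expr2 mulr_suml; apply: eq_bigr => a _; rewrite mulr_suml.
apply: eq_bigr => b _; rewrite !mulr_sumr; apply: eq_bigr => c _.
rewrite !mulr_sumr; apply: eq_bigr => d _; ring.
Qed.

Ltac dist := repeat match goal with H : is_true (negb (_ == _)) |- _ => revert H end;
  rewrite -?val_eqE /=; intros; lia.

Lemma LB {n m} (i j k l : 'I_n) : (i < j)%N -> (k < l)%N ->
  ((i == k) && (j == l))%:R * (qq m - qq m ^+ 2) + ((i == k) && (j != l))%:R * vv m
  <= expect p (fun X : {ffun 'I_n -> attr m} => g R (X i) (X j) * g R (X k) (X l)) - qq m ^+ 2.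
Proof.
move=> hij hkl.
case: (eqVneq i k) => [e|hik].
  subst k.
  case: (eqVneq j l) => [e|hjl].
    subst l.
    rewrite F2; [by rewrite /= mulr1n mulr0n mul0r mul1r addr0 | dist].
  rewrite F3; [by rewrite /= mulr1n mulr0n mul0r mul1r add0r | dist | dist | dist].
rewrite /= !mul0r addr0 subr_ge0.
case: (eqVneq j l) => [e|hjl].
  subst l.
  rewrite (@expect_ext _ _ _ (fun X => g R (X j) (X i) * g R (X j) (X k))); last first.
    by move=> X; rewrite gC [g R (X k) _]gC.
  rewrite F3; [ | dist | dist | dist]. rewrite -subr_ge0; exact: vv_ge0.
case: (eqVneq i l) => [e|hil].
  subst l.
  rewrite (@expect_ext _ _ _ (fun X => g R (X i) (X j) * g R (X i) (X k))); last first.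
    by move=> X; rewrite [g R (X k) _]gC.
  rewrite F3; [ | dist | dist | dist]. rewrite -subr_ge0; exact: vv_ge0.
case: (eqVneq j k) => [e|hjk].
  subst k.
  rewrite (@expect_ext _ _ _ (fun X => g R (X j) (X i) * g R (X j) (X l))); last first.
    by move=> X; rewrite gC.
  rewrite F3; [ | dist | dist | dist]. rewrite -subr_ge0; exact: vv_ge0.
rewrite F4; [by [] | dist | dist | dist | dist | dist | dist].
Qed.

Lemma sq_sum2 {n} (F : 'I_n -> 'I_n -> R) :
  (\sum_(i < n) \sum_(j < n | (i < j)%N) F i j) ^+ 2 =
  \sum_(i < n) \sum_(j < n | (i < j)%N) \sum_(k < n) \sum_(l < n | (k < l)%N) F i j * F k l.
Proof.
rewrite expr2 mulr_suml; apply: eq_bigr => i _; rewrite mulr_suml; apply: eq_bigr => j _.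
rewrite mulr_sumr; apply: eq_bigr => k _; by rewrite mulr_sumr.
Qed.

Lemma VarE {n m} : Var_NE n m p =
  \sum_(i < n) \sum_(j < n | (i < j)%N) \sum_(k < n) \sum_(l < n | (k < l)%N)
    (expect p (fun X : {ffun 'I_n -> attr m} => g R (X i) (X j) * g R (X k) (X l)) - qq m ^+ 2).
Proof.
rewrite /Var_NE.
have -> : expect p (fun X : {ffun 'I_n -> attr m} => NE R X) =
   \sum_(i < n) \sum_(j < n | (i < j)%N) qq m.
  rewrite /NE expect_sum; apply: eq_bigr => i _; rewrite expect_sum; apply: eq_bigr => j hj.
  by rewrite F1 //; dist.
rewrite sq_sum2 (@expect_ext _ _ _ (fun X => \sum_(i < n) \sum_(j < n | (i < j)%N) \sum_(k < n)
   \sum_(l < n | (k < l)%N) g R (X i) (X j) * g R (X k) (X l))); last first.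
  by move=> X; rewrite /NE sq_sum2.
rewrite expect_sum -sumrB; apply: eq_bigr => i _.
rewrite expect_sum -sumrB; apply: eq_bigr => j _.
rewrite expect_sum -sumrB; apply: eq_bigr => k _.
rewrite expect_sum -sumrB; apply: eq_bigr => l _.
by rewrite expr2.
Qed.

Lemma count_sum {n} (i : nat) (c : R) :
  \sum_(l < n | (i < l)%N) c = (n - i.+1)%:R * c.
Proof.
transitivity (\sum_(i.+1 <= l < n) c); last by rewrite sumr_const_nat mulr_natl.
by rewrite big_geq_mkord.
Qed.

Lemma inner_sum {n} (i j : 'I_n) (D v : R) : (i < j)%N ->
  \sum_(k < n) \sum_(l < n | (k < l)%N)
     (((i == k) && (j == l))%:R * D + ((i == k) && (j != l))%:R * v)
  = D + ((n - i.+1)%:R - 1) * v.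
Proof.
move=> hij.
transitivity (\sum_(k < n) (i == k)%:R * \sum_(l < n | (k < l)%N)
    ((j == l)%:R * (D - v) + v)).
  apply: eq_bigr => k _; rewrite mulr_sumr; apply: eq_bigr => l _.
  by case: (i == k); case: (j == l) => /=; ring.
rewrite sum_ind big_split /= count_sum.
rewrite (bigD1 j) //= eqxx big1 => [|l /andP [_ hl]]; last by rewrite eq_sym (negbTE hl) mul0r.
rewrite mulr1n; ring.
Qed.

Lemma sum_lin n (D v : R) :
  6 * \sum_(i < n) (i%:R * (D + (i%:R - 1) * v)) =
  3 * D * n%:R * (n%:R - 1) + 2 * v * n%:R * (n%:R - 1) * (n%:R - 2).
Proof.
elim: n => [|n IH]; first by rewrite big_ord0; ring.
rewrite big_ord_recr /= mulrDr IH -addn1 natrD; ring.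
Qed.

Lemma sum_LB {n} (D v : R) :
  6 * \sum_(i < n) \sum_(j < n | (i < j)%N) \sum_(k < n) \sum_(l < n | (k < l)%N)
     (((i == k) && (j == l))%:R * D + ((i == k) && (j != l))%:R * v)
  = 3 * D * n%:R * (n%:R - 1) + 2 * v * n%:R * (n%:R - 1) * (n%:R - 2).
Proof.
rewrite -sum_lin; congr (_ * _).
transitivity (\sum_(i < n) \sum_(j < n | (i < j)%N) (D + ((n - i.+1)%:R - 1) * v)).
  apply: eq_bigr => i _; apply: eq_bigr => j hj; exact: inner_sum.
under eq_bigr do rewrite count_sum.
rewrite (reindex_inj rev_ord_inj) /=; apply: eq_bigr => i _.
have -> : (n - (n - i.+1).+1)%N = i by have := ltn_ord i; lia.
done.
Qed.

Lemma sum_mu2 m : \sum_(x : attr m) \sum_(y : attr m) mu p x * mu p y = 1.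
Proof. under eq_bigr do rewrite -mulr_sumr sum_mu mulr1. exact: sum_mu. Qed.

Lemma sq2_sum {m} (c : R) :
  \sum_(x : attr m) \sum_(y : attr m) mu p x * mu p y * (g R x y - c) ^+ 2
  = (1 - 2 * c) * qq m + c ^+ 2.
Proof.
transitivity (\sum_(x : attr m) \sum_(y : attr m)
   ((1 - 2 * c) * (mu p x * mu p y * g R x y) + c ^+ 2 * (mu p x * mu p y))).
  apply: eq_bigr => x _; apply: eq_bigr => y _.
  have := gg x y; move: (g R x y) => z hz; rewrite expr2.
  transitivity (mu p x * mu p y * (z * z - 2 * c * z + c * c)); first ring.
  rewrite hz; ring.
rewrite /qq -[c ^+ 2]mulr1 -[X in _ = _ + _ * X](sum_mu2 m) !mulr_sumr -big_split /=.
apply: eq_bigr => x _; rewrite !mulr_sumr -big_split. by apply: eq_bigr => y _; rewrite mulr1.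
Qed.

Lemma le_of_eq (a b : R) : a = b -> a <= b.
Proof. by move=> ->; exact: lexx. Qed.

Lemma qq_bounds m : (0 < m)%N -> 0 < qq m /\ qq m < 1.
Proof.
move=> hm; have hp0 := p0; have hp1 := p1; rewrite qqE /phat.
have h1 : 0 < 1 - p ^+ 2 by rewrite subr_gt0; nra.
have h2 : 1 - p ^+ 2 < 1 by rewrite ltrBlDr ltrDl exprn_gt0.
have h3 := exprn_gt0 m h1.
have h4 : (1 - p ^+ 2) ^+ m < 1 by rewrite exprn_ilt1 ?ltW // -lt0n.
split; lra.
Qed.

Lemma sq1_sum {m} (y : attr m) (c : R) :
  \sum_(x : attr m) mu p x * (g R x y - c) ^+ 2 = (1 - 2 * c) * rr y + c ^+ 2.
Proof.
transitivity (\sum_(x : attr m) ((1 - 2 * c) * (mu p x * g R y x) + c ^+ 2 * mu p x)).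
  apply: eq_bigr => x _; rewrite gC.
  have := gg y x; move: (g R y x) => z hz; rewrite expr2.
  transitivity (mu p x * (z * z - 2 * c * z + c * c)); first ring.
  rewrite hz; ring.
by rewrite big_split /= -!mulr_sumr sum_mu mulr1.
Qed.

Lemma contr0_le m : (0 < m)%N -> contr0_sq m p <= qq m - qq m ^+ 2.
Proof.
move=> hm; have [q0 q1] := qq_bounds _ hm.
rewrite /contr0_sq /gbar2 -qqE.
apply: le_trans (_ : \sum_(x : attr m) \sum_(y : attr m) mu p x * mu p y * (g R x y - qq m) ^+ 2 <= _).
  apply: ler_sum => x _; apply: ler_sum => y _.
  apply: ler_wpM2l; first by apply: mulr_ge0; apply: mu_ge0.
  have ht : 0 <= (g R x y - qq m) ^+ 2 <= 1.
    by case: (g01 x y) => ->; apply/andP; split; nra.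
  have -> : (g R x y - qq m) ^+ 4 = ((g R x y - qq m) ^+ 2) ^+ 2 by rewrite -exprM.
  move: ht; move: ((g R x y - qq m) ^+ 2) => t /andP [t0 t1]; nra.
by rewrite sq2_sum; apply: le_of_eq; ring.
Qed.

Lemma contr1_le m : (0 < m)%N ->
  contr1_sq m p <= 2 * (qq m - qq m ^+ 2) ^+ 2 + 2 * vv m.
Proof.
move=> hm; have [q0 q1] := qq_bounds _ hm.
rewrite /contr1_sq /gbar2 -qqE vvE.
under eq_bigr do rewrite sq1_sum.
apply: le_trans (_ : \sum_(y : attr m) mu p y * (2 * (qq m - qq m ^+ 2) ^+ 2 + 2 * (rr y - qq m) ^+ 2) <= _).
  apply: ler_sum => y _; apply: ler_wpM2l; first exact: mu_ge0.
  move: (rr y) => r; move: q0 q1; move: (qq m) => q q0 q1.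
  have h1 : 0 <= ((q - q ^+ 2) - (1 - 2 * q) * (r - q)) ^+ 2 := sqr_ge0 _.
  have h2 : 0 <= q * (1 - q) * (r - q) ^+ 2.
    apply: mulr_ge0; last exact: sqr_ge0.
    apply: mulr_ge0; lra.
  nra.
rewrite mulr_sumr -[X in _ <= X + _]mulr1 -(sum_mu m) !mulr_sumr -big_split /=.
apply: le_of_eq; apply: eq_bigr => y _; ring.
Qed.
End S.
Lemma VarLB (R : realType) (p : R) (p0 : 0 < p) (p1 : p < 1) n m :
  3 * (qq R p m - qq R p m ^+ 2) * n%:R * (n%:R - 1)
  + 2 * vv R p m * n%:R * (n%:R - 1) * (n%:R - 2) <= 6 * Var_NE n m p.
Proof.
rewrite (VarE _ _ p0 p1) -(sum_LB _ _ p0 p1); apply: ler_wpM2l => //.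
apply: ler_sum => i _; apply: ler_sum => j hij; apply: ler_sum => k _; apply: ler_sum => l hkl.
exact: (LB _ _ p0 p1).
Qed.

Theorem lemma7p1 (R : realType) :
  exists C : R, 0 < C /\
    forall (n m : nat) (p : R), (3 <= n)%N -> (3 <= m)%N -> 0 < p -> p < 1 ->
      (n%:R ^+ 2 * contr0_sq m p
         <= C * (Var_NE n m p) ^+ 2
              * (1 / (n%:R ^+ 2 * phat m p * (1 - phat m p))))
      /\
      (n%:R ^+ 3 * contr1_sq m p
         <= C * (Var_NE n m p) ^+ 2
              * (1 / (n%:R ^+ 2 * phat m p * (1 - phat m p)) + 1 / n%:R)).
Proof.
exists 81; split => // n m p hn hm p0 p1.
have hm0 : (0 < m)%N by lia.
have hVL := VarLB _ _ p0 p1 n m.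
have [q0 q1] := qq_bounds _ _ p0 p1 _ hm0.
have c0le := contr0_le _ _ p0 p1 _ hm0.
have c1le := contr1_le _ _ p0 p1 _ hm0.
have v0 := vv_ge0 _ _ p0 p1 m.
rewrite -(qqE _ p m).
move: hVL c0le c1le v0 q0 q1.
move: (Var_NE n m p) (contr0_sq m p) (contr1_sq m p) (vv R p m) (qq R p m) => V c0 c1 v q.
move=> hVL c0le c1le v0 q0 q1.
have hN : 3 <= n%:R :> R by rewrite (ler_nat R 3 n).
move: hVL; move: (n%:R : R) hN => N hN hVL.
set D := q - q ^+ 2.
have D0 : 0 < D by rewrite /D; nra.
have hDe : N ^+ 2 * q * (1 - q) = N ^+ 2 * D by rewrite /D; ring.
rewrite hDe.
have hVA : N ^+ 2 * D <= 3 * V.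
  have h1 : 0 <= D * N * (N - 3) by apply: mulr_ge0; [apply: mulr_ge0; lra|lra].
  have h2 : 0 <= v * N * (N - 1) * (N - 2).
    by apply: mulr_ge0; [apply: mulr_ge0; [apply: mulr_ge0; lra|lra]|lra].
  nra.
have hVB : 2 * N ^+ 3 * v <= 27 * V.
  have h1 : 0 <= D * N * (N - 1) by apply: mulr_ge0; [apply: mulr_ge0; lra|lra].
  have h2 : 0 <= v * N * (7 * N - 6) * (N - 3).
    by apply: mulr_ge0; [apply: mulr_ge0; [apply: mulr_ge0; lra|lra]|lra].
  nra.
have hA0 : 0 <= N ^+ 2 * D by apply: mulr_ge0; [apply: sqr_ge0|lra].
have hB0 : 0 <= 2 * N ^+ 3 * v by apply: mulr_ge0; [apply: mulr_ge0; [lra|apply: exprn_ge0; lra]|lra].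
have hAA : (N ^+ 2 * D) * (N ^+ 2 * D) <= (3 * V) * (3 * V) by apply: ler_pM.
have hAB : (N ^+ 2 * D) * (2 * N ^+ 3 * v) <= (3 * V) * (27 * V) by apply: ler_pM.
have ND0 : 0 < N ^+ 2 * D by apply: mulr_gt0; [apply: exprn_gt0; lra|lra].
have N0 : 0 < N by lra.
split.
  rewrite div1r ler_pdivlMr //.
  apply: le_trans (_ : (N ^+ 2 * D) * (N ^+ 2 * D) <= _).
    apply: ler_wpM2r; first exact: ltW ND0.
    by apply: ler_wpM2l; [apply: exprn_ge0; exact: ltW N0|].
  nra.
rewrite mulrDr !div1r.
have e1 : N ^+ 3 * (2 * D ^+ 2) <= 81 * V ^+ 2 / N.
  rewrite ler_pdivlMr //.
  have -> : N ^+ 3 * (2 * D ^+ 2) * N = 2 * ((N ^+ 2 * D) * (N ^+ 2 * D)) by ring.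
  nra.
have e2 : N ^+ 3 * (2 * v) <= 81 * V ^+ 2 / (N ^+ 2 * D).
  rewrite ler_pdivlMr //.
  have -> : N ^+ 3 * (2 * v) * (N ^+ 2 * D) = (N ^+ 2 * D) * (2 * N ^+ 3 * v) by ring.
  nra.
apply: le_trans (_ : N ^+ 3 * (2 * D ^+ 2 + 2 * v) <= _).
  by apply: ler_wpM2l; [apply: exprn_ge0; exact: ltW N0|].
rewrite mulrDr addrC; exact: lerD.
Qed.
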